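(* Let $q\ge2$, $n\ge1$, and ${\boldsymbol y}\in\Sigma_q^{n+1}$ with run length profile $(r_1,\dots,r_{\rho({\boldsymbol y})})$. Then $\mathsf{H}^{\mathsf{In}}_{1\text{-}\mathsf{Ins}}({\boldsymbol y})$ is invariant to permutations of the run length profile of ${\boldsymbol y}$ and $$\mathsf{H}^{\mathsf{In}}_{1\text{-}\mathsf{Ins}}({\boldsymbol y})=\log_2(n+1)-\frac{1}{n+1}\sum_{i=1}^{\rho({\boldsymbol y})}r_i\log_2 r_i.$$
   Context: $\Sigma_q=\{0,1,\dots,q-1\}$. For sequences ${\boldsymbol x}$ of length $\ell$ and ${\boldsymbol y}$ of length $N\ge\ell$, $\omega_{{\boldsymbol x}}({\boldsymbol y})$ is the number of index tuples $1\le i_1<\dots<i_\ell\le N$ with $y_{i_j}=x_j$. The $k$-insertion channel with input length $n$ maps ${\boldsymbol x}\in\Sigma_q^n$ to ${\boldsymbol y}\in\Sigma_q^{n+k}$ with probability $\omega_{{\boldsymbol x}}({\boldsymbol y})/(\binom{n+k}{k}q^k)$. Under uniform transmission $X$ is uniform on $\Sigma_q^n$ and $\mathsf{H}^{\mathsf{In}}_{k\text{-}\mathsf{Ins}}({\boldsymbol y})=H(X\mid Y={\boldsymbol y})$ (base-2 logarithms), with posterior $P({\boldsymbol x}\mid {\boldsymbol y})=\Pr\{{\boldsymbol y}\mid{\boldsymbol x}\}/\sum_{{\boldsymbol x}'}\Pr\{{\boldsymbol y}\mid{\boldsymbol x}'\}$. A run is a maximal block of identical consecutive symbols; $\rho({\boldsymbol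 y})$ is the number of runs and the run length profile is the vector of run lengths from left to right. Convention $0\log 0$ does not arise since $r_i\ge1$. *)

(* Defs.v *)
From HB Require Import structures.
From mathcomp Require Import all_boot all_order all_algebra.
From mathcomp Require Import all_classical all_reals all_analysis.

Set Implicit Arguments.
Unset Strict Implicit.
Unset Printing Implicit Defensive.

Import Order.TTheory GRing.Theory Num.Theory.
Local Open Scope ring_scope.

Section Defs.
Variable R : realType.

Definition log2 (x : R) : R := ln x / ln 2.

(* omega_x(y): number of index tuples i_1 < ... < i_l with y_{i_j} = x_j,
   i.e. number of masks m selecting the subsequence x from y *)
Definition omega (q : nat) (x y : seq 'I_q) : nat :=
  #|[pred m : (size y).-tuple bool | mask m y == x]|.

(* k-insertion channel transition probability Pr{ y | x } *)
Definition ins_prob (q k n : nat) (x : n.-tuple 'I_q) (y : (n + k).-tuple 'I_q) : R :=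
  (omega x y)%:R / ('C(n + k, k) * q ^ k)%:R.

(* posterior P(x | y) under uniform input *)
Definition posterior (q k n : nat) (y : (n + k).-tuple 'I_q) (x : n.-tuple 'I_q) : R :=
  ins_prob x y / \sum_(x' : n.-tuple 'I_q) ins_prob x' y.

Definition ent_term (p : R) : R := if p == 0 then 0 else - (p * log2 p).

(* H^In_{k-Ins}(y) = H(X | Y = y) *)
Definition H_ins (q k n : nat) (y : (n + k).-tuple 'I_q) : R :=
  \sum_(x : n.-tuple 'I_q) ent_term (posterior y x).

End Defs.

(* decomposition of a sequence into its runs (maximal blocks of equal symbols) *)
Fixpoint runs (T : eqType) (s : seq T) : seq (seq T) :=
  match s with
  | [::] => [::]
  | x :: s' =>
      match runs s' with
      | (y :: r) :: rs => if x == y then (x :: y :: r) :: rs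
                          else [:: x] :: (y :: r) :: rs
      | rs => [:: x] :: rs
      end
  end.

Definition rl_profile (T : eqType) (s : seq T) : seq nat := map size (runs s).

Definition nruns (T : eqType) (s : seq T) : nat := size (rl_profile s).

(* Main.v *)
Require Import Defs.
From HB Require Import structures.
From mathcomp Require Import all_boot all_order all_algebra.
From mathcomp Require Import all_classical all_reals all_analysis.
From mathcomp Require Import zify.
Set Implicit Arguments.
Unset Strict Implicit.
Unset Printing Implicit Defensive.
Import Order.TTheory GRing.Theory Num.Theory.

Definition del {T : Type} (j : nat) (s : seq T) := take j s ++ drop j.+1 s.
Definition cnt {T : eqType} (s x : seq T) :=
  count (fun j => del j s == x) (iota 0 (size s)).

Lemma runs_cons (T : eqType) (a : T) s : exists r rs, runs (a :: s) = (a :: r) :: rs.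
Proof.
rewrite /=; case: (runs s) => [|[|y r] rs].
- by exists [::], [::].
- by exists [::], ([::] :: rs).
- case: ifP => [/eqP <-|_]; first by exists [:: a & r], rs.
  by exists [::], ((y::r)::rs).
Qed.

Lemma sumn_prof (T : eqType) (s : seq T) : sumn (rl_profile s) = size s.
Proof.
rewrite /rl_profile; elim: s => //= a s; case: (runs s) => [|[|y r] rs] /= IH.
- by rewrite -IH.
- by rewrite -IH.
- by case: ifP => _ /=; rewrite -IH ?addSn.
Qed.

Lemma cnt_cons (T : eqType) (a : T) s x :
  cnt (a :: s) x = (s == x) + count (fun k => a :: del k s == x) (iota 0 (size s)).
Proof.
rewrite /cnt /= -[1]addn0 iotaDl count_map /=.
by rewrite /del /= drop0.
Qed.

Lemma runs_step (T : eqType) (a : T) s : runs (a :: s) =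
  match runs s with
  | (y :: r) :: rs => if a == y then (a :: y :: r) :: rs
                      else [:: a] :: (y :: r) :: rs
  | rs => [:: a] :: rs
  end.
Proof. by []. Qed.

Lemma del0 (T : Type) (c : T) u : del 0 (c :: u) = u.
Proof. by rewrite /del /= drop0. Qed.

Lemma delS (T : Type) (c : T) u k : del k.+1 (c :: u) = c :: del k u.
Proof. by []. Qed.

Lemma cnt_cons2 (T : eqType) (a c : T) s z :
  cnt (a :: s) (c :: z) = (s == c :: z) + (a == c) * cnt s z.
Proof.
rewrite cnt_cons /cnt; congr (_ + _).
rewrite (eq_count (a2 := fun k => (a == c) && (del k s == z))); last first.
  by move=> k /=; rewrite eqseq_cons.
case: (a == c); first by rewrite mul1n.
by rewrite mul0n count_pred0.
Qed.

Local Open Scope ring_scope.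

Lemma iota0S n : iota 0 n.+1 = 0%N :: map succn (iota 0 n).
Proof.
rewrite /= -[1%N]addn0 iotaDl; congr (_ :: _); apply: eq_map => i; exact: add1n.
Qed.

Lemma sum_const_iota (R : numDomainType) (c : R) m F :
  \sum_(k <- iota m F) c = (c *+ F)%R.
Proof.
elim: F m => [|F IH] m; first by rewrite big_nil.
by rewrite /= big_cons IH mulrS.
Qed.

Lemma inv (T : eqType) (s : seq T) : s != [::] ->
  [/\ forall k, (k < size s)%N -> (del k s == del 0 s) = (k < head 0 (rl_profile s))%N,
      cnt s (del 0 s) = head 0%N (rl_profile s) &
      forall (R : numDomainType) (h : nat -> R),
        \sum_(j <- iota 0 (size s)) h (cnt s (del j s)) =
        \sum_(r <- rl_profile s) r%:R * h r ].
Proof.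
Local Open Scope nat_scope.
elim: s => // a s IH _; case: s IH => [|b t] IH.
  split.
  - by move=> k; rewrite ltnS leqn0 => /eqP ->; rewrite eqxx.
  - by [].
  - by move=> R h; rewrite /= !big_cons !big_nil mul1r.
have [ih1 ih2 ih3] := IH isT.
have [r [rs Hr]] := runs_cons b t.
have Hp : rl_profile (b :: t) = (size r).+1 :: map size rs by rewrite /rl_profile Hr.
have Hps : rl_profile [:: a, b & t] = if a == b then (size r).+2 :: map size rs
                                       else 1 :: (size r).+1 :: map size rs.
  by rewrite /rl_profile runs_step Hr; case: (a == b).
rewrite Hp /= in ih1 ih2; rewrite Hp in ih3.
set F := (size r).+1 in ih1 ih2 ih3 Hps.
have HF : F <= size (b :: t).
  by rewrite -sumn_prof Hp /= leq_addr.
have Key : forall k, k < size (b :: t) ->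
    cnt [:: a, b & t] (del k.+1 [:: a, b & t]) = ((a == b) && (k < F)) + cnt (b :: t) (del k (b :: t)).
  move=> k Hk; rewrite delS cnt_cons2 eqxx mul1n eqseq_cons [b == a]eq_sym.
  have -> : (t == del k (b :: t)) = (del k (b :: t) == del 0 (b :: t)) by rewrite del0 eq_sym.
  by rewrite ih1.
split.
- case=> [|k] Hk; first by rewrite eqxx Hps; case: (a == b).
  rewrite delS del0 eqseq_cons.
  have -> : (del k (b :: t) == t) = (del k (b :: t) == del 0 (b :: t)) by rewrite del0.
  rewrite ih1 // Hps.
  by case: (a == b).
- by rewrite del0 cnt_cons2 eqxx -{2}(del0 b t) ih2 Hps; case: (a == b) => /=; rewrite ?mul1n ?mul0n ?add1n.
move=> R h; rewrite Hps.
have -> : iota 0 (size [:: a, b & t]) = 0 :: map succn (iota 0 (size (b :: t))).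
  by rewrite iota0S.
rewrite big_cons big_map del0 cnt_cons2 eqxx -{2}(del0 b t) ih2.
rewrite (eq_big_seq (fun k => h (((a == b) && (k < F)) + cnt (b :: t) (del k (b :: t))))); last first.
  by move=> k; rewrite mem_iota add0n => Hk; rewrite Key.
have ih3' := ih3 R h.
have HS : forall k, k \in iota 0 F -> cnt (b :: t) (del k (b :: t)) = F.
  move=> k; rewrite mem_iota add0n => Hk.
  have /eqP -> : del k (b :: t) == del 0 (b :: t) by rewrite ih1 // (leq_trans Hk HF).
  by rewrite ih2.
have HS2 : forall k, k \in iota (0 + F) (size (b :: t) - F) -> (k < F) = false.
  by move=> k; rewrite mem_iota add0n => /andP [Hk _]; rewrite ltnNge Hk.
have Hsplit : iota 0 (size (b :: t)) = iota 0 F ++ iota (0 + F) (size (b :: t) - F).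
  by rewrite -iotaD subnKC.
rewrite Hsplit !big_cat in ih3' *.
have A2 : (\sum_(k <- iota 0 F) h (cnt (b :: t) (del k (b :: t))) = h F *+ F)%R.
  by rewrite (eq_big_seq (fun=> h F)) ?sum_const_iota // => k Hk; rewrite HS.
have A3 : (\sum_(k <- iota (0 + F) (size (b :: t) - F))
            h (((a == b) && (k < F)) + cnt (b :: t) (del k (b :: t)))%N =
          \sum_(k <- iota (0 + F) (size (b :: t) - F)) h (cnt (b :: t) (del k (b :: t))))%R.
  by apply: eq_big_seq => k /HS2 ->; rewrite andbF.
rewrite A2 in ih3'; rewrite A3.
case Hab: (a == b).
- have A1 : (\sum_(k <- iota 0 F) h ((true && (k < F)) + cnt (b :: t) (del k (b :: t)))%N = h F.+1 *+ F)%R.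
    rewrite (eq_big_seq (fun=> h F.+1)) ?sum_const_iota // => k Hk.
    by rewrite HS // -(mem_iota 0 F) Hk add1n.
  rewrite A1 mul1n add1n big_cons.
  rewrite [X in _ = X]big_cons in ih3'.
  set X := (\sum_(k <- _ ) _)%R in ih3' *.
  set Y := (\sum_(r <- _ ) _)%R in ih3' *.
  have -> : X = Y by apply: (addrI (h F *+ F)%R); rewrite ih3' mulr_natl.
  by rewrite mulr_natl [in RHS]mulrS addrA.
- have A1 : (\sum_(k <- iota 0 F) h ((false && (k < F)) + cnt (b :: t) (del k (b :: t)))%N = \sum_(k <- iota 0 F) h (cnt (b :: t) (del k (b :: t))))%R.
    by [].
  by rewrite A1 A2 ih3' [in RHS]big_cons mul1r mul0n addn0.
Qed.

Local Open Scope nat_scope.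

Fixpoint allbits (N : nat) : seq (seq bool) :=
  if N is N'.+1 then map (cons false) (allbits N') ++ map (cons true) (allbits N')
  else [:: [::]].

Lemma mem_map_cons (c : bool) A m :
  (m \in map (cons c) A) = if m is d :: m' then (d == c) && (m' \in A) else false.
Proof.
case: m => [|d m']; first by apply/mapP => -[].
case: (d =P c) => [->|ne] /=.
  by rewrite mem_map // => x y [].
by apply/mapP => -[x _ [E _]].
Qed.

Lemma mem_allbits N m : (m \in allbits N) = (size m == N).
Proof.
elim: N m => [|N IH] [|b m] //=; rewrite mem_cat !mem_map_cons // IH eqSS.
by destruct b; rewrite /= ?orbF.
Qed.

Lemma uniq_allbits N : uniq (allbits N).
Proof.
elim: N => //= N IH; rewrite cat_uniq !map_inj_uniq // ?IH ?andbT; try by move=> x y [].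
rewrite has_map; apply/hasPn => m _ /=; by rewrite mem_map_cons.
Qed.

Lemma card_count N (P : pred (seq bool)) :
  #|[pred m : N.-tuple bool | P m]| = count P (allbits N).
Proof.
rewrite cardE /enum_mem -enumT size_filter.
rewrite (eq_count (a2 := preim val P)) // -count_map.
apply/permP; apply: uniq_perm.
- by rewrite map_inj_uniq ?enum_uniq //; exact: val_inj.
- exact: uniq_allbits.
move=> m; rewrite mem_allbits; apply/mapP/idP.
- by case=> x _ ->; rewrite size_tuple.
- by move=> H; exists (Tuple H); rewrite ?mem_enum.
Qed.

Lemma count_false (T : Type) (s : seq T) : count (fun _ => false) s = 0.
Proof. by elim: s. Qed.

Lemma count_full (T : eqType) (y x : seq T) : size x = size y ->
  count (fun m => mask m y == x) (allbits (size y)) = (y == x).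
Proof.
elim: y x => [|a y IH] [|c z] //= Hs.
case: Hs => Hs.
rewrite count_cat !count_map.
rewrite (eq_count (a2 := pred0)); last first.
  move=> m /=; apply/negbTE/eqP => E.
  by have := size_subseq (mask_subseq m y); rewrite E /= Hs ltnn.
rewrite count_pred0 add0n.
rewrite (eq_count (a2 := fun m => (a == c) && (mask m y == z))); last first.
  by move=> m /=; rewrite eqseq_cons.
rewrite eqseq_cons; case: (a == c); last by rewrite count_false.
by rewrite IH.
Qed.

Lemma W_cnt (T : eqType) (y' : seq T) : forall a x, size x = size y' ->
  count (fun m => mask m (a :: y') == x) (allbits (size y').+1) = cnt (a :: y') x.
Proof.
elim: y' => [|b t IH] a x Hs.
  by case: x Hs.
rewrite [allbits _]/= count_cat !count_map cnt_cons.
rewrite (eq_count (a1 := preim (cons false) _) (a2 := fun m => mask m (b :: t) == x)) //.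
rewrite count_full //; congr (_ + _).
case: x Hs => [|c z] Hs.
  by rewrite (eq_count (a2 := pred0)) // count_pred0 (eq_count (a2 := pred0)) // count_pred0.
case: Hs => Hs.
rewrite (eq_count (a2 := fun m => (a == c) && (mask m (b :: t) == z))); last first.
  by move=> m /=; rewrite eqseq_cons.
rewrite (eq_count (a1 := fun k => a :: del k (b :: t) == c :: z) (a2 := fun k => (a == c) && (del k (b :: t) == z))); last first.
  by move=> m /=; rewrite eqseq_cons.
case: (a == c); last by rewrite !count_false.
by rewrite IH.
Qed.

Lemma omega_cnt (T : eqType) (s x : seq T) : size s = (size x).+1 ->
  #|[pred m : (size s).-tuple bool | mask m s == x]| = cnt s x.
Proof.
case: s => [|a s'] //= [Hs].
by rewrite (card_count _ (fun m => mask m (a :: s') == x)) W_cnt.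
Qed.

Lemma size_del (T : Type) (s : seq T) j : j < size s -> size (del j s) = (size s).-1.
Proof. rewrite /del size_cat size_take size_drop => H; rewrite H; lia. Qed.

Local Open Scope ring_scope.

Lemma natr_count (R : numDomainType) (T : Type) (P : pred T) l :
  (count P l)%:R = \sum_(j <- l) (P j)%:R :> R.
Proof. by elim: l => [|a l IH]; rewrite ?big_nil ?big_cons //= natrD IH. Qed.

Lemma sum_cnt (R : numDomainType) (T : finType) n (s : seq T) (g : seq T -> R) :
  size s = n.+1 ->
  \sum_(x : n.-tuple T) (cnt s x)%:R * g x = \sum_(j <- iota 0 (size s)) g (del j s).
Proof.
move=> Hs.
under eq_bigr => x _ do rewrite /cnt natr_count mulr_suml.
rewrite exchange_big /=; rewrite big_seq [RHS]big_seq; apply: eq_bigr => j.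
rewrite mem_iota add0n => Hj.
have Hd : size (del j s) == n by rewrite size_del // Hs.
rewrite (bigD1 (Tuple Hd)) //= eqxx mul1r big1 ?addr0 // => x Hx.
case: eqP => [E|_]; last by rewrite mul0r.
by case/eqP: Hx; apply: val_inj; rewrite /= E.
Qed.

From mathcomp Require Import ring.

Lemma main_formula (R : realType) (q n : nat) (hq : (2 <= q)%N) (y : (n + 1).-tuple 'I_q) :
  H_ins R y = log2 (n + 1)%:R
    - (n + 1)%:R^-1 * \sum_(r <- rl_profile y) (r%:R * log2 (r%:R : R)).
Proof.
set N := (n + 1)%N.
have HyN : size y = N by rewrite size_tuple.
have HyS : size y = n.+1 by rewrite HyN /N addn1.
have HN0 : (N%:R : R) != 0 by rewrite pnatr_eq0 /N addn1.
have Hom : forall x : n.-tuple 'I_q, omega x y = cnt y x.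
  by move=> x; rewrite /omega omega_cnt // HyS size_tuple.
have Hsum : \sum_(x : n.-tuple 'I_q) ((cnt y x)%:R : R) = N%:R.
  transitivity (\sum_(x : n.-tuple 'I_q) (cnt y x)%:R * (fun=> (1:R)) (val x)).
    by apply: eq_bigr => x _; rewrite mulr1.
  by rewrite (@sum_cnt R _ n y (fun=> (1:R))) // sum_const_iota HyN.
have HD : ((('C(n + 1, 1) * q ^ 1)%N)%:R : R) != 0.
  by rewrite pnatr_eq0 muln_eq0 bin1 expn1 addn1 /= -lt0n (ltn_trans _ hq).
have Hpost : forall x : n.-tuple 'I_q, posterior R y x = (cnt y x)%:R / N%:R.
  move=> x; rewrite /posterior /ins_prob -mulr_suml.
  under eq_bigr => x' _ do rewrite Hom.
  by rewrite Hom Hsum invf_div mulrA divfK.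
set g := fun c : nat => - (N%:R^-1 * log2 (c%:R / N%:R : R)).
have Hent : forall c : nat, ent_term (c%:R / N%:R : R) = c%:R * g c.
  move=> c; rewrite /ent_term /g; case: (c =P 0)%N => [->|Hc].
    by rewrite mul0r eqxx mul0r.
  rewrite mulf_eq0 invr_eq0 (negbTE HN0) orbF pnatr_eq0 (introF eqP Hc).
  by rewrite [RHS]mulrN [in RHS]mulrA.
rewrite /H_ins.
under eq_bigr => x _ do rewrite Hpost Hent.
rewrite (@sum_cnt R _ n y (fun u => g (cnt y u))) //.
have Hy0 : (y : seq 'I_q) != [::] by rewrite -size_eq0 HyS.
have [_ _ H3] := inv Hy0.
rewrite H3.
have Hterm : forall r : nat, r%:R * g r =
    N%:R^-1 * (r%:R * log2 N%:R) - N%:R^-1 * (r%:R * log2 (r%:R : R)).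
  move=> r; rewrite /g; case: (r =P 0)%N => [->|Hr].
    by rewrite !mul0r mulr0 subr0.
  have Hr0 : (0 : R) < r%:R by rewrite ltr0n lt0n; apply/eqP.
  have HN : (0 : R) < N%:R by rewrite ltr0n /N addn1.
  rewrite /log2 ln_div ?posrE //.
  by ring.
under eq_bigr => r _ do rewrite Hterm.
rewrite sumrB -!mulr_sumr -mulr_suml -natr_sum -sumnE sumn_prof HyN.
by rewrite mulrA mulVf ?mul1r.
Qed.

Theorem theorem2 (R : realType) (q n : nat) (hq : (2 <= q)%N) (hn : (1 <= n)%N)
    (y : (n + 1).-tuple 'I_q) :
  (forall y' : (n + 1).-tuple 'I_q,
      perm_eq (rl_profile y) (rl_profile y') ->
      H_ins R y' = H_ins R y) /\
  H_ins R y =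
    log2 (n + 1)%:R
    - (n + 1)%:R^-1 * \sum_(r <- rl_profile y) (r%:R * log2 (r%:R : R)).
Proof.
split; last exact: main_formula.
move=> y' Hp; rewrite !main_formula //.
by rewrite (perm_big _ Hp).
Qed.
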